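(* Let $B\in\mathbb{R}^{n\times d}$ with $\|B\|=R\in(0,\infty)$, $g^*:\mathbb{R}^n\to\mathbb{R}\cup\{+\infty\}$ proper, lower semicontinuous and $\gamma$-strongly convex ($\gamma\ge0$), $\ell:\mathbb{R}^d\to\mathbb{R}\cup\{+\infty\}$ proper, lower semicontinuous and $\sigma$-strongly convex ($\sigma\ge0$). For the PDA$^2$ algorithm in the context, for all $(u,v)\in\mathcal{X}\times\mathcal{Y}$ and $k\ge1$, $$\psi_k(y_k)\le A_kg^*(v)+\frac12\|v-y_0\|^2-\frac{1+\gamma A_k}{2}\|v-y_k\|^2,\qquad \phi_k(x_k)\le A_k\ell(u)+\frac12\|u-x_0\|^2-\frac{1+\sigma A_k}{2}\|u-x_k\|^2.$$
   Context: Norms are Euclidean; $\sigma$-strong convexity of $f$ means $f((1-\alpha)x+\alpha\hat x)\le(1-\alpha)f(x)+\alpha f(\hat x)-\frac\sigma2\alpha(1-\alpha)\|\hat x-x\|^2$ for all $x,\hat x$, $\alpha\in(0,1)$. $\mathcal{X}=\mathrm{dom}(\ell)$, $\mathcal{Y}=\mathrm{dom}(g^* )$. PDA$^2$ algorithm: given $(x_0,y_0),(u,v)\in\mathcal{X}\times\mathcal{Y}$, set $a_0=A_0=0$, $x_{-1}=x_0$, $\phi_0(x)=\frac12\|x-x_0\|^2$, $\psi_0(y)=\frac12\|y-y_0\|^2$. For $k=1,2,\dots$: $a_k=\frac{\sqrt{(1+\sigma A_{k-1})(1+\gamma A_{k-1})}}{\sqrt2R}$, $A_k=A_{k-1}+a_k$;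 $\bar x_{k-1}=x_{k-1}+\frac{a_{k-1}}{a_k}(x_{k-1}-x_{k-2})$; $\psi_k(y)=\psi_{k-1}(y)+a_k(\langle-B\bar x_{k-1},y-v\rangle+g^*(y))$, $y_k=\arg\min_{y}\psi_k(y)$; $\phi_k(x)=\phi_{k-1}(x)+a_k(\langle x-u,B^Ty_k\rangle+\ell(x))$, $x_k=\arg\min_x\phi_k(x)$. *)

(* Defs.v *)
From HB Require Import structures.
From mathcomp Require Import all_boot all_order all_algebra.
From mathcomp Require Import all_classical all_reals all_analysis.
Set Implicit Arguments. Unset Strict Implicit. Unset Printing Implicit Defensive.
Import Order.TTheory GRing.Theory Num.Theory.
Import numFieldNormedType.Exports.
Local Open Scope classical_set_scope.
Local Open Scope ring_scope.

Definition inner (R : realType) (n : nat) (a b : 'cV[R]_n) : R :=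
  \sum_(i < n) a i 0 * b i 0.

Definition enorm (R : realType) (n : nat) (a : 'cV[R]_n) : R :=
  Num.sqrt (\sum_(i < n) a i 0 ^+ 2).

Definition opnorm (R : realType) (n d : nat) (B : 'M[R]_(n, d)) : R :=
  sup [set enorm (B *m x) | x in [set x : 'cV[R]_d | enorm x <= 1]].

Definition proper_fun (R : realType) (n : nat) (f : 'cV[R]_n -> \bar R) :=
  (forall x, f x != -oo%E) /\ (exists x, f x != +oo%E).

Definition dom (R : realType) (n : nat) (f : 'cV[R]_n -> \bar R) :=
  [set x | (f x < +oo)%E].

Definition strongly_convex (R : realType) (n : nat) (s : R)
    (f : 'cV[R]_n -> \bar R) :=
  forall (x xh : 'cV[R]_n) (al : R), 0 < al < 1 ->
    (f ((1 - al) *: x + al *: xh)%R <=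
     (1 - al)%:E * f x + al%:E * f xh
       - (s / 2 * al * (1 - al) * enorm (xh - x) ^+ 2)%:E)%E.

Fixpoint aA (R : realType) (sigma gamma Rn : R) (k : nat) : R * R :=
  match k with
  | 0 => (0, 0)
  | k'.+1 =>
      let A' := (aA sigma gamma Rn k').2 in
      let a := Num.sqrt ((1 + sigma * A') * (1 + gamma * A'))
               / (Num.sqrt 2 * Rn) in
      (a, A' + a)
  end.

Definition a_seq (R : realType) (sigma gamma Rn : R) (k : nat) : R :=
  (aA sigma gamma Rn k).1.
Definition A_seq (R : realType) (sigma gamma Rn : R) (k : nat) : R :=
  (aA sigma gamma Rn k).2.

(* Extrapolated point xbar_j = x_j + (a_j / a_{j+1}) (x_j - x_{j-1}),
   with x_{-1} = x_0 (realised by truncated subtraction j.-1). *)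
Definition xbar (R : realType) (d : nat) (sigma gamma Rn : R)
    (x : nat -> 'cV[R]_d) (j : nat) : 'cV[R]_d :=
  x j + (a_seq sigma gamma Rn j / a_seq sigma gamma Rn j.+1) *: (x j - x j.-1).

Definition psi (R : realType) (n d : nat) (sigma gamma Rn : R)
    (B : 'M[R]_(n, d)) (gs : 'cV[R]_n -> \bar R) (y0 v : 'cV[R]_n)
    (x : nat -> 'cV[R]_d) (k : nat) (y : 'cV[R]_n) : \bar R :=
  ((2^-1 * enorm (y - y0) ^+ 2)%:E +
   \sum_(1 <= i < k.+1)
     ((a_seq sigma gamma Rn i)%:E *
      ((inner (- (B *m xbar sigma gamma Rn x i.-1)) (y - v))%:E + gs y)))%E.

Definition phi (R : realType) (n d : nat) (sigma gamma Rn : R)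
    (B : 'M[R]_(n, d)) (l : 'cV[R]_d -> \bar R) (x0 u : 'cV[R]_d)
    (y : nat -> 'cV[R]_n) (k : nat) (z : 'cV[R]_d) : \bar R :=
  ((2^-1 * enorm (z - x0) ^+ 2)%:E +
   \sum_(1 <= i < k.+1)
     ((a_seq sigma gamma Rn i)%:E *
      ((inner (z - u) (B^T *m y i))%:E + l z)))%E.

(* Main.v *)
Require Import Defs.
From HB Require Import structures.
From mathcomp Require Import all_boot all_order all_algebra.
From mathcomp Require Import all_classical all_reals all_analysis.
From mathcomp Require Import ring lra.
Import Order.TTheory GRing.Theory Num.Theory.
Import numFieldNormedType.Exports.
Local Open Scope classical_set_scope.
Local Open Scope ring_scope.

Lemma enorm_sq (R : realType) m (w : 'cV[R]_m) :
  enorm w ^+ 2 = \sum_(i < m) w i 0 ^+ 2.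
Proof. by rewrite /enorm sqr_sqrtr // sumr_ge0 // => i _; exact: sqr_ge0. Qed.

Lemma quad_id (R : realType) m (z p c : 'cV[R]_m) (al : R) :
  enorm ((1 - al) *: z + al *: p - c) ^+ 2 =
  (1 - al) * enorm (z - c) ^+ 2 + al * enorm (p - c) ^+ 2
  - al * (1 - al) * enorm (p - z) ^+ 2.
Proof.
rewrite !enorm_sq !mulr_sumr -big_split -sumrB; apply: eq_bigr => i _.
rewrite !mxE /=; ring.
Qed.

Lemma sum_aff (R : realType) (K : nat) (a x : nat -> R) (r c : R) :
  \sum_(1 <= i < K.+1) a i * (c * x i + r) =
  c * \sum_(1 <= i < K.+1) a i * x i + r * \sum_(1 <= i < K.+1) a i.
Proof.
rewrite !mulr_sumr -big_split; apply: eq_bigr => i _ /=; ring.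
Qed.

Lemma A_sum (R : realType) (s g Rn : R) k :
  A_seq s g Rn k = \sum_(1 <= i < k.+1) a_seq s g Rn i.
Proof.
elim: k => [|k IH]; first by rewrite big_geq.
by rewrite big_nat_recr //= -IH.
Qed.

Lemma a_step_pos (R : realType) (s g Rn A : R) :
  0 < Rn -> 0 <= s -> 0 <= g -> 0 <= A ->
  0 < Num.sqrt ((1 + s * A) * (1 + g * A)) / (Num.sqrt 2 * Rn).
Proof.
move=> HR Hs Hg HA.
have h1 : 0 < (1 + s * A) * (1 + g * A).
  apply: mulr_gt0; rewrite ltr_wpDr // mulr_ge0 //.
apply: divr_gt0; first by rewrite sqrtr_gt0.
by apply: mulr_gt0 => //; rewrite sqrtr_gt0.
Qed.

Lemma A_ge0 (R : realType) (s g Rn : R) k :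
  0 < Rn -> 0 <= s -> 0 <= g -> 0 <= A_seq s g Rn k /\ 0 < a_seq s g Rn k.+1.
Proof.
move=> HR Hs Hg; elim: k => [|k [IH1 IH2]].
  split; first by rewrite /A_seq.
  by apply: (@a_step_pos _ s g Rn 0).

have H1 : 0 <= A_seq s g Rn k.+1.
  by rewrite /A_seq /= addr_ge0 // ltW.
split => //.
by apply: (@a_step_pos _ s g Rn (A_seq s g Rn k.+1)).
Qed.

Lemma limit_arg (R : realType) (E b c D : R) :
  0 <= c -> 0 <= D ->
  (forall al, 0 < al < 1 -> E <= b - (1 - al) * c * D) -> E <= b - c * D.
Proof.
move=> Hc HD H.
rewrite leNgt; apply/negP => Hlt.
set X := c * D.
have HX : 0 <= X by rewrite mulr_ge0.
set t := E - (b - X).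
have Ht : 0 < t by rewrite /t subr_gt0.
set al := t / (2 * t + 2 * X).
have Hden : 0 < 2 * t + 2 * X by lra.
have Hal : al * (2 * t + 2 * X) = t by rewrite /al mulfVK // gt_eqF.
have Hal0 : 0 < al by rewrite /al divr_gt0.
have Hal1 : al < 1.
  by rewrite /al ltr_pdivrMr //; lra.
have := H al; rewrite Hal0 Hal1 => /(_ isT).
have -> : b - (1 - al) * c * D = b - X + al * X by rewrite /X; ring.
have Hax : al * X < t.
  clearbody al t X. nra.
move=> Hf.
have : t <= al * X by rewrite /t; lra.
lra.
Qed.

Lemma sum_aff1 (R : realType) (K : nat) (a x : nat -> R) (r : R) :
  \sum_(1 <= i < K.+1) a i * (x i + r) =
  \sum_(1 <= i < K.+1) a i * x i + r * \sum_(1 <= i < K.+1) a i.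
Proof.
rewrite !mulr_sumr -big_split; apply: eq_bigr => i _ /=; ring.
Qed.

Lemma ge0_nninf (R : realType) (x : \bar R) : (0 <= x)%E -> x != -oo%E.
Proof. by case: x. Qed.

Lemma key (R : realType) (m K : nat) (f : 'cV[R]_m -> \bar R) (s : R)
  (c0 p z : 'cV[R]_m) (a : nat -> R) (h : nat -> 'cV[R]_m -> R) :
  0 <= s -> strongly_convex s f -> (forall w, f w != -oo%E) -> (f p < +oo)%E ->
  (1 <= K)%N -> (forall i, 0 <= a i) -> 0 < a 1%N ->
  (forall i, h i p = 0) ->
  (forall i al, h i ((1 - al) *: z + al *: p) = (1 - al) * h i z) ->
  (forall w, ((2^-1 * enorm (z - c0) ^+ 2)%:E
              + \sum_(1 <= i < K.+1) ((a i)%:E * ((h i z)%:E + f z))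
           <= (2^-1 * enorm (w - c0) ^+ 2)%:E
              + \sum_(1 <= i < K.+1) ((a i)%:E * ((h i w)%:E + f w)))%E) ->
  ((2^-1 * enorm (z - c0) ^+ 2)%:E
     + \sum_(1 <= i < K.+1) ((a i)%:E * ((h i z)%:E + f z))
   <= (\sum_(1 <= i < K.+1) a i)%:E * f p
      + (2^-1 * enorm (p - c0) ^+ 2
         - (1 + s * \sum_(1 <= i < K.+1) a i) / 2 * enorm (p - z) ^+ 2)%:E)%E.
Proof.
move=> Hs Hcvx Hninf Hp HK Ha0 Ha1 Hhp Hhz Hmin.
have Ffin : forall w r,
  ((2^-1 * enorm (w - c0) ^+ 2)%:E
    + \sum_(1 <= i < K.+1) ((a i)%:E * ((h i w)%:E + r%:E)))%E
  = (2^-1 * enorm (w - c0) ^+ 2 + \sum_(1 <= i < K.+1) a i * (h i w + r))%:E.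
  move=> w r; rewrite (eq_bigr (fun i => (a i * (h i w + r))%:E)).
    by rewrite sumEFin -EFinD.
  by move=> i _; rewrite -EFinD -EFinM.
case Efp: (f p) => [rp| |]; last by move: (Hninf p); rewrite Efp.
  2: by rewrite Efp in Hp.
case Efz: (f z) => [rz| |]; last by move: (Hninf z); rewrite Efz.
  2: have := Hmin p; rewrite Efp Efz (Ffin p rp).
  2: rewrite big_nat_recl // addey // gt0_muley ?lte_fin // addye ?addey //.
  2: apply: ge0_nninf; apply: sume_ge0 => i _; apply: mule_ge0; first by rewrite lee_fin.
  2: by rewrite addey.
rewrite (Ffin z rz) -EFinM -EFinD lee_fin.
set A := \sum_(1 <= i < K.+1) a i.
have HA : 0 <= A by rewrite /A sumr_ge0.
rewrite sum_aff1 -/A [leRHS]addrA; apply: limit_arg.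
- by rewrite divr_ge0 // addr_ge0 // mulr_ge0.
- exact: sqr_ge0.
move=> al Hal.
set w := (1 - al) *: z + al *: p.
have Hc := Hcvx z p al Hal.
rewrite Efz Efp -!EFinM -EFinD -/w in Hc.
case Efw: (f w) => [rw| |]; last by move: (Hninf w); rewrite Efw.
  2: by rewrite Efw in Hc.
rewrite Efw lee_fin in Hc.
have Hm := Hmin w; rewrite Efz Efw (Ffin z rz) (Ffin w rw) lee_fin in Hm.
have Hsw : \sum_(1 <= i < K.+1) a i * (h i w + rw)
   = \sum_(1 <= i < K.+1) a i * ((1 - al) * h i z + rw).
  by apply: eq_bigr => i _; rewrite /w Hhz.
rewrite Hsw /w quad_id in Hm.
rewrite sum_aff sum_aff1 -/A in Hm.
have HAc := ler_wpM2l HA Hc.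
case/andP: Hal => Hal0 Hal1.
rewrite -(ler_pM2l Hal0).
set H := \sum_(1 <= i < K.+1) a i * h i z.
rewrite -/H in Hm.
nra.
Qed.

Lemma a_ge0 (R : realType) (s g Rn : R) i :
  0 < Rn -> 0 <= s -> 0 <= g -> 0 <= a_seq s g Rn i.
Proof.
move=> HR Hs Hg; case: i => [|i]; first by rewrite /a_seq.
by have [_ /ltW] := A_ge0 _ s g Rn i HR Hs Hg.
Qed.

Lemma inner_l0 (R : realType) m (c p : 'cV[R]_m) : inner c (p - p) = 0.
Proof. by rewrite /inner big1 // => j _; rewrite subrr mxE mulr0. Qed.

Lemma inner_r0 (R : realType) m (c p : 'cV[R]_m) : inner (p - p) c = 0.
Proof. by rewrite /inner big1 // => j _; rewrite subrr mxE mul0r. Qed.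

Lemma inner_laff (R : realType) m (c z p : 'cV[R]_m) al :
  inner c ((1 - al) *: z + al *: p - p) = (1 - al) * inner c (z - p).
Proof.
rewrite /inner mulr_sumr; apply: eq_bigr => j _; rewrite !mxE /=; ring.
Qed.

Lemma inner_raff (R : realType) m (c z p : 'cV[R]_m) al :
  inner ((1 - al) *: z + al *: p - p) c = (1 - al) * inner (z - p) c.
Proof.
rewrite /inner mulr_sumr; apply: eq_bigr => j _; rewrite !mxE /=; ring.
Qed.

Theorem lemma1 (R : realType) (n d : nat) (B : 'M[R]_(n, d)) (Rn : R)
    (gs : 'cV[R]_n -> \bar R) (l : 'cV[R]_d -> \bar R) (gamma sigma : R)
    (x : nat -> 'cV[R]_d) (y : nat -> 'cV[R]_n)
    (u : 'cV[R]_d) (v : 'cV[R]_n) :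
  0 < Rn -> opnorm B = Rn ->
  proper_fun gs -> lower_semicontinuous gs -> 0 <= gamma ->
  strongly_convex gamma gs ->
  proper_fun l -> lower_semicontinuous l -> 0 <= sigma ->
  strongly_convex sigma l ->
  dom l (x 0%N) -> dom gs (y 0%N) -> dom l u -> dom gs v ->
  (* y_k = argmin psi_k and x_k = argmin phi_k for every k >= 1 *)
  (forall k, (1 <= k)%N -> forall z,
      (psi sigma gamma Rn B gs (y 0%N) v x k (y k)
       <= psi sigma gamma Rn B gs (y 0%N) v x k z)%E) ->
  (forall k, (1 <= k)%N -> forall z,
      (phi sigma gamma Rn B l (x 0%N) u y k (x k)
       <= phi sigma gamma Rn B l (x 0%N) u y k z)%E) ->
  forall k, (1 <= k)%N ->
    (psi sigma gamma Rn B gs (y 0%N) v x k (y k)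
     <= (A_seq sigma gamma Rn k)%:E * gs v
        + (2^-1 * enorm (v - y 0%N) ^+ 2
           - (1 + gamma * A_seq sigma gamma Rn k) / 2 * enorm (v - y k) ^+ 2)%:E)%E
    /\
    (phi sigma gamma Rn B l (x 0%N) u y k (x k)
     <= (A_seq sigma gamma Rn k)%:E * l u
        + (2^-1 * enorm (u - x 0%N) ^+ 2
           - (1 + sigma * A_seq sigma gamma Rn k) / 2 * enorm (u - x k) ^+ 2)%:E)%E.
Proof.
move=> HR _ [Hgs _] _ Hg Hcg [Hl _] _ Hs Hcl _ _ Hu Hv Hpsi Hphi k Hk.
have Ha0 := fun i => a_ge0 _ sigma gamma Rn i HR Hs Hg.
have [_ Ha1] := A_ge0 _ sigma gamma Rn 0 HR Hs Hg.
rewrite A_sum; split.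
- apply: (key _ _ _ _ _ _ _ _ _ (fun i w => inner (- (B *m xbar sigma gamma Rn x i.-1)) (w - v)))
    => //.
  + by move=> i; rewrite inner_l0.
  + by move=> i al; rewrite inner_laff.
  + move=> w; exact: (Hpsi k Hk w).
- apply: (key _ _ _ _ _ _ _ _ _ (fun i w => inner (w - u) (B^T *m y i))) => //.
  + by move=> i; rewrite inner_r0.
  + by move=> i al; rewrite inner_raff.
  + move=> w; exact: (Hphi k Hk w).
Qed.
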